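(* Let $0<q<1$, let $\pi=\pi_+\oplus\pi_-$ be the spin representation of $\mathcal{A}(S^2_q)$ on $\mathcal{H}=\mathcal{H}_+\oplus\mathcal{H}_-$, and let $D|l,m\rangle_\pm=(l+\tfrac12)|l,m\rangle_\mp$. Let $B$ be the $*$-algebra generated by $\pi(\mathcal{A}(S^2_q))$ and the commutators $[D,\pi(x)]$, $x\in\mathcal{A}(S^2_q)$. Then $B\subset\mathcal{B}(\mathcal{H})$ (all these commutators are bounded), and $(\mathcal{A}(S^2_q),\mathcal{H},D)$ is a regular spectral triple of metric dimension $2$.
   Context: $\mathcal{A}(S^2_q)$ is the unital $*$-algebra generated by $a,a^*$ and $b=b^*$ with relations $ba=q^2ab$, $a^*a+b^2=1$, $q^4aa^*+b^2=q^4$. $\mathcal{H}_\pm$ each have orthonormal basis $|l,m\rangle_\pm$, $l\in\mathbb{N}+\tfrac12$, $m=-l,-l+1,\dots,l$ (vectors with indices out of range are $0$). With $[x]=(q^x-q^{-x})/(q-q^{-1})$: $\pi_\pm(a)|l,m\rangle_\pm=q^{m-l-\frac12}\frac{\sqrt{[l+m+1][l+m+2]}}{[2l+2]}|l+1,m+1\rangle_\pm-q^{m+l+\frac12}\frac{\sqrt{[l-m-1][l-m]}}{[2l]}|l-1,m+1\rangle_\pm\pm\frac{(1+q^2)q^{m-\frac12}}{[2l][2l+2]}\sqrt{[l+m+1][l-m]}\,|l,m+1\rangle_\pm$, $\pi_\pm(b)|l,m\rangle_\pm=-q^{m+1}\frac{\sqrt{[l+m+1][l-m+1]}}{[2l+2]}|l+1,m\rangle_\pm-q^{m+1}\frac{\sqrt{[l+m][l-m]}}{[2l]}|l-1,m\rangle_\pm\pm\frac{[l-m+1][l+m]-q^2[l-m][l+m+1]}{[2l][2l+2]}|l,m\rangle_\pm$;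 these extend to bounded $*$-representations. A spectral triple is regular if $A\cup[D,A]\subset\bigcap_j\mathrm{dom}\,\delta^j$, $\delta(T)=[|D|,T]$. Metric dimension $d$ means the singular values of $|D|^{-1}$ are of order $n^{-1/d}$ as $n\to\infty$. *)

(* Defs.v *)
From Stdlib Require Import Reals Lra ZArith List.
From Coquelicot Require Import Coquelicot.
Open Scope R_scope.

(** * Basis of H = H_+ (+) H_-
   A basis vector |l,m>_s is encoded by (s, n, j) : bool * Z * Z with
   s = true for "+", s = false for "-", l = n + 1/2, m = j + 1/2.
   It is a genuine basis vector iff n >= 0 and -l <= m <= l,
   i.e. 0 <= n and -(n+1) <= j <= n. *)
Definition idx : Type := (bool * Z * Z)%type.

Definition validb (i : idx) : bool :=
  let '(s, n, j) := i in
  (0 <=? n)%Z && (- (n + 1) <=? j)%Z && (j <=? n)%Z.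

Definition valid (i : idx) : Prop := validb i = true.

Definition lval (n : Z) : R := IZR n + / 2.
Definition mval (j : Z) : R := IZR j + / 2.

(** Vectors: coordinate functions (only valid coordinates are meaningful);
    operators act on coordinate functions. *)
Definition V : Type := idx -> R.
Definition Op : Type := V -> V.

Definition ext (f : V) (i : idx) : R := if validb i then f i else 0.

Definition qnum (q x : R) : R := (Rpower q x - Rpower q (- x)) / (q - / q).

Definition sgn (s : bool) : R := if s then 1 else -1.

(** coefficients of pi_pm(a) |l,m> (l = n+1/2, m = j+1/2) *)
Definition A1 (q : R) (n j : Z) : R :=
  let l := lval n in let m := mval j in
  Rpower q (m - l - / 2) * sqrt (qnum q (l + m + 1) * qnum q (l + m + 2))
    / qnum q (2 * l + 2).
Definition A2 (q : R) (n j : Z) : R :=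
  let l := lval n in let m := mval j in
  Rpower q (m + l + / 2) * sqrt (qnum q (l - m - 1) * qnum q (l - m))
    / qnum q (2 * l).
Definition A3 (q : R) (n j : Z) : R :=
  let l := lval n in let m := mval j in
  (1 + q ^ 2) * Rpower q (m - / 2) / (qnum q (2 * l) * qnum q (2 * l + 2))
    * sqrt (qnum q (l + m + 1) * qnum q (l - m)).

(** coefficients of pi_pm(b) |l,m> *)
Definition B1 (q : R) (n j : Z) : R :=
  let l := lval n in let m := mval j in
  Rpower q (m + 1) * sqrt (qnum q (l + m + 1) * qnum q (l - m + 1))
    / qnum q (2 * l + 2).
Definition B2 (q : R) (n j : Z) : R :=
  let l := lval n in let m := mval j in
  Rpower q (m + 1) * sqrt (qnum q (l + m) * qnum q (l - m)) / qnum q (2 * l).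
Definition B3 (q : R) (n j : Z) : R :=
  let l := lval n in let m := mval j in
  (qnum q (l - m + 1) * qnum q (l + m) - q ^ 2 * qnum q (l - m) * qnum q (l + m + 1))
    / (qnum q (2 * l) * qnum q (2 * l + 2)).

(** pi(a) = pi_+(a) (+) pi_-(a), written coordinatewise:
    pi(a) |l,m>_s = A1 |l+1,m+1>_s - A2 |l-1,m+1>_s + sgn s * A3 |l,m+1>_s *)
Definition pi_a (q : R) : Op := fun f i =>
  let '(s, n, j) := i in
  if validb i then
      A1 q (n - 1) (j - 1) * ext f (s, n - 1, j - 1)%Z
    - A2 q (n + 1) (j - 1) * ext f (s, n + 1, j - 1)%Z
    + sgn s * A3 q n (j - 1) * ext f (s, n, j - 1)%Z
  else 0.

(** pi(a-star) = adjoint of pi(a) (the matrix coefficients are real, so this is the transpose) *)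
Definition pi_astar (q : R) : Op := fun f i =>
  let '(s, n, j) := i in
  if validb i then
      A1 q n j * ext f (s, n + 1, j + 1)%Z
    - A2 q n j * ext f (s, n - 1, j + 1)%Z
    + sgn s * A3 q n j * ext f (s, n, j + 1)%Z
  else 0.

(** pi(b) |l,m>_s = - B1 |l+1,m>_s - B2 |l-1,m>_s + sgn s * B3 |l,m>_s *)
Definition pi_b (q : R) : Op := fun f i =>
  let '(s, n, j) := i in
  if validb i then
    - B1 q (n - 1) j * ext f (s, n - 1, j)%Z
    - B2 q (n + 1) j * ext f (s, n + 1, j)%Z
    + sgn s * B3 q n j * ext f (s, n, j)
  else 0.

(** Dirac operator D |l,m>_pm = (l + 1/2) |l,m>_mp ; note l + 1/2 = n + 1 *)
Definition Dop : Op := fun f i =>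
  let '(s, n, j) := i in
  if validb i then (IZR n + 1) * ext f (negb s, n, j) else 0.

(** |D| |l,m>_pm = (l + 1/2) |l,m>_pm  (indeed D^2 = |D|^2, |D| >= 0) *)
Definition absD : Op := fun f i =>
  let '(s, n, j) := i in
  if validb i then (IZR n + 1) * f i else 0.

Definition op_add (S T : Op) : Op := fun f i => S f i + T f i.
Definition op_scal (r : R) (T : Op) : Op := fun f i => r * T f i.
Definition op_comp (S T : Op) : Op := fun f => S (T f).
Definition op_id : Op := fun f => f.
Definition comm (S T : Op) : Op := fun f i => S (T f) i - T (S f) i.

Inductive InAlg (G : Op -> Prop) : Op -> Prop :=
| InAlg_gen : forall T, G T -> InAlg G T
| InAlg_id : InAlg G op_id
| InAlg_add : forall S T, InAlg G S -> InAlg G T -> InAlg G (op_add S T)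
| InAlg_scal : forall r T, InAlg G T -> InAlg G (op_scal r T)
| InAlg_comp : forall S T, InAlg G S -> InAlg G T -> InAlg G (op_comp S T).

Definition piA (q : R) : Op -> Prop :=
  InAlg (fun T => T = pi_a q \/ T = pi_astar q \/ T = pi_b q).

Definition Bgen (q : R) (T : Op) : Prop :=
  piA q T \/ exists T0, piA q T0 /\ T = comm Dop T0.

(** B : the algebra generated by pi(A) and [D, pi(A)]
   (it is a *-algebra) *)
Definition Balg (q : R) : Op -> Prop := InAlg (Bgen q).

Definition sumsq (L : list idx) (f : V) : R :=
  fold_right (fun i acc => f i ^ 2 + acc) 0 L.

(** T is bounded on H: ||T f|| <= C ||f|| for all finitely supported f,
    i.e. T extends to an element of B(H). *)
Definition Bounded (T : Op) : Prop :=
  exists C : R, 0 <= C /\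
    forall (L : list idx) (f : V),
      NoDup L -> List.Forall valid L -> (forall i, ~ In i L -> f i = 0) ->
      forall L' : list idx, NoDup L' -> List.Forall valid L' ->
        sumsq L' (T f) <= C ^ 2 * sumsq L f.

Definition delta_ (e : idx) : V :=
  fun i => if (Bool.eqb (fst (fst i)) (fst (fst e))
              && Z.eqb (snd (fst i)) (snd (fst e))
              && Z.eqb (snd i) (snd e))%bool then 1 else 0.

Definition absD_eig (i : idx) : R := let '(s, n, j) := i in IZR n + 1.

(** (A(S^2_q), H, D) is a spectral triple:
    pi(A) acts by bounded operators, D is symmetric (self-adjoint, being
    diagonalised by the orthonormal basis with real eigenvalues), D has
    compact resolvent (|D|^{-1} compact: its eigenvalues tend to 0 with
    finite multiplicities), and [D, pi(x)] is bounded for every x. *)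
Definition SpectralTriple (q : R) : Prop :=
  (forall T, piA q T -> Bounded T) /\
  (forall i e, valid i -> valid e -> Dop (delta_ e) i = Dop (delta_ i) e) /\
  (forall eps, 0 < eps -> exists L : list idx,
      forall i, valid i -> eps <= / absD_eig i -> In i L) /\
  (forall T, piA q T -> Bounded (comm Dop T)).

Definition delta (T : Op) : Op := comm absD T.

(** regularity: A and [D, A] lie in the domain of every power of delta *)
Definition Regular (q : R) : Prop :=
  forall T, Bgen q T -> forall k : nat, Bounded (Nat.iter k delta T).

(** singular values of |D|^{-1} (decreasing rearrangement of its eigenvalues
    counted with multiplicity, indexed from 0):
    mu_k = inf { t >= 0 | #{ i : eigenvalue of |D|^{-1} at i > t } <= k } *)
Definition count_le (t : R) (k : nat) : Prop :=
  exists L : list idx, (length L <= k)%nat /\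
    forall i, valid i -> t < / absD_eig i -> In i L.

Definition sing_absDinv (k : nat) : R :=
  real (Glb_Rbar (fun t => 0 <= t /\ count_le t k)).

Definition MetricDimension (d : R) : Prop :=
  exists (c C : R) (N : nat), 0 < c /\ 0 < C /\ (1 <= N)%nat /\
    forall k : nat, (N <= k)%nat ->
      c * Rpower (INR k) (- / d) <= sing_absDinv k <=
      C * Rpower (INR k) (- / d).

(* Main.v *)
Require Import Defs.
From Stdlib Require Import Reals Lra Lia ZArith List.
From Coquelicot Require Import Coquelicot.
Open Scope R_scope.


Record Sh := mkSh { fl : bool; sa : Z; sb : Z; sc : idx -> R }.

Definition tgt (e : Sh) (i : idx) : idx :=
  let '(s, n, j) := i in (xorb (fl e) s, n + sa e, j + sb e)%Z.

Definition appS (e : Sh) (f : V) (i : idx) : R :=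
  if validb i then sc e i * ext f (tgt e i) else 0.

Definition sumS (l : list Sh) (f : V) (i : idx) : R :=
  fold_right (fun e acc => appS e f i + acc) 0 l.

Definition Rep (l : list Sh) (T : Op) : Prop :=
  forall f i, validb i = true -> T f i = sumS l f i.

Definition bnd (e : Sh) : Prop := exists M, forall i, validb i = true ->
  validb (tgt e i) = true -> Rabs (sc e i) <= M.

Definition nice (e : Sh) : Prop := fl e = false /\ bnd e /\
  exists M, forall s n j, validb (s, n, j) = true -> validb (tgt e (s, n, j)) = true ->
  Rabs ((IZR n + 1) * sc e (negb s, n, j) - (IZR (n + sa e) + 1) * sc e (s, n, j)) <= M.

Lemma validb_s s s' n j : validb (s, n, j) = validb (s', n, j).
Proof. reflexivity. Qed.

Lemma tgt_inj e i1 i2 : tgt e i1 = tgt e i2 -> i1 = i2.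
Proof.
  destruct i1 as [[s1 n1] j1], i2 as [[s2 n2] j2]; simpl; intros H; inversion H.
  assert (s1 = s2) by (destruct (fl e), s1, s2; simpl in *; congruence).
  f_equal; [f_equal|]; auto; lia.
Qed.

Lemma sumS_ext l g h i : (forall k, validb k = true -> g k = h k) -> sumS l g i = sumS l h i.
Proof.
  intros H; induction l as [|e l IH]; simpl; auto.
  rewrite IH; f_equal. unfold appS, ext.
  destruct (validb i); auto. destruct (validb (tgt e i)) eqn:E; auto. rewrite H; auto.
Qed.

Lemma sumS_cons e l f i : sumS (e :: l) f i = appS e f i + sumS l f i.
Proof. reflexivity. Qed.

Lemma sumS_app l1 l2 f i : sumS (l1 ++ l2) f i = sumS l1 f i + sumS l2 f i.
Proof. induction l1; simpl; [ring|]. unfold sumS in *; simpl; rewrite IHl1; ring. Qed.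

Definition compS (e1 e2 : Sh) : Sh :=
  mkSh (xorb (fl e1) (fl e2)) (sa e1 + sa e2)%Z (sb e1 + sb e2)%Z
    (fun i => if validb (tgt e1 i) then sc e1 i * sc e2 (tgt e1 i) else 0).

Lemma tgt_comp e1 e2 i : tgt (compS e1 e2) i = tgt e2 (tgt e1 i).
Proof.
  destruct i as [[s n] j]; simpl. f_equal; [f_equal|].
  - destruct (fl e1), (fl e2), s; reflexivity.
  - ring.
  - ring.
Qed.

Lemma appS_comp e1 e2 f i : appS e1 (appS e2 f) i = appS (compS e1 e2) f i.
Proof.
  unfold appS at 1 3. destruct (validb i); auto.
  rewrite tgt_comp. simpl sc. unfold ext at 1. unfold appS.
  destruct (validb (tgt e1 i)); ring.
Qed.

Lemma appS_add e u v i : appS e (fun k => u k + v k) i = appS e u i + appS e v i.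
Proof. unfold appS, ext. destruct (validb i); [|ring]. destruct (validb (tgt e i)); ring. Qed.

Lemma appS_sum e l f i : appS e (sumS l f) i = sumS (map (compS e) l) f i.
Proof.
  induction l as [|e2 l IH]; simpl.
  - unfold appS, ext. destruct (validb i); [|ring]. destruct (validb (tgt e i)); simpl; ring.
  - unfold sumS at 1. simpl. fold (sumS l f).
    rewrite (appS_add e (appS e2 f) (sumS l f)). rewrite IH, appS_comp. reflexivity.
Qed.

Definition compL (l1 l2 : list Sh) := flat_map (fun e1 => map (compS e1) l2) l1.

Lemma Rep_comp l1 l2 S T : Rep l1 S -> Rep l2 T -> Rep (compL l1 l2) (op_comp S T).
Proof.
  intros H1 H2 f i Hi. unfold op_comp. rewrite H1 by auto.
  rewrite (sumS_ext l1 (T f) (sumS l2 f)) by (intros; apply H2; auto).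
  clear H1. induction l1 as [|e l IH]; [reflexivity|].
  unfold compL; cbn [flat_map]; fold (compL l l2).
  rewrite sumS_app, <- IH, sumS_cons, appS_sum. reflexivity.
Qed.

Lemma Rep_add l1 l2 S T : Rep l1 S -> Rep l2 T -> Rep (l1 ++ l2) (op_add S T).
Proof. intros H1 H2 f i Hi. unfold op_add. rewrite sumS_app, H1, H2; auto. Qed.

Definition scS (r : R) (e : Sh) : Sh := mkSh (fl e) (sa e) (sb e) (fun i => r * sc e i).

Lemma Rep_scal r l T : Rep l T -> Rep (map (scS r) l) (op_scal r T).
Proof.
  intros H f i Hi. unfold op_scal. rewrite H by auto. clear H.
  induction l as [|e l IH]; simpl; [ring|].
  rewrite Rmult_plus_distr_l, IH. f_equal. unfold appS. simpl.
  replace (tgt (scS r e) i) with (tgt e i) by (destruct i as [[? ?] ?]; reflexivity).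
  destruct (validb i); ring.
Qed.

Definition idS : Sh := mkSh false 0 0 (fun _ => 1).

Lemma Rep_id : Rep (idS :: nil) op_id.
Proof.
  intros f [[s n] j] Hi. unfold op_id, sumS; simpl. unfold appS. rewrite Hi. simpl.
  rewrite !Z.add_0_r. unfold ext. rewrite Hi. ring.
Qed.

Definition dcS (e : Sh) : Sh := mkSh (negb (fl e)) (sa e) (sb e)
  (fun i => let '(s, n, j) := i in
     (IZR n + 1) * sc e (negb s, n, j) - (IZR (n + sa e) + 1) * sc e (s, n, j)).

Lemma appS_dc e f s n j : validb (s, n, j) = true ->
  (IZR n + 1) * appS e f (negb s, n, j) - appS e (Dop f) (s, n, j) = appS (dcS e) f (s, n, j).
Proof.
  intros Hi. unfold appS. rewrite (validb_s (negb s) s), Hi.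
  cbn [tgt dcS sc fl sa sb].
  unfold ext. rewrite (validb_s (xorb (negb (fl e)) s) (xorb (fl e) s)).
  rewrite (validb_s (xorb (fl e) (negb s)) (xorb (fl e) s)).
  destruct (validb (xorb (fl e) s, (n + sa e)%Z, (j + sb e)%Z)) eqn:E.
  - unfold Dop. rewrite E. unfold ext. rewrite (validb_s (negb (xorb (fl e) s)) (xorb (fl e) s)), E.
    replace (xorb (fl e) (negb s)) with (xorb (negb (fl e)) s) by (destruct (fl e), s; reflexivity).
    replace (negb (xorb (fl e) s)) with (xorb (negb (fl e)) s) by (destruct (fl e), s; reflexivity).
    ring.
  - ring.
Qed.

Lemma Rep_dc l T : Rep l T -> Rep (map dcS l) (comm Dop T).
Proof.
  intros H f [[s n] j] Hi. unfold comm. unfold Dop at 1. rewrite Hi.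
  unfold ext at 1. rewrite (validb_s (negb s) s), Hi. rewrite H by auto. rewrite H by auto.
  clear H. induction l as [|e l IH]; [simpl; ring|].
  cbn [map]. rewrite !sumS_cons, <- IH, <- appS_dc by auto. ring.
Qed.

Definition dsS (e : Sh) : Sh := mkSh (fl e) (sa e) (sb e)
  (fun i => let '(s, n, j) := i in ((IZR n + 1) - (IZR (n + sa e) + 1)) * sc e (s, n, j)).

Lemma appS_ds e f s n j : validb (s, n, j) = true ->
  (IZR n + 1) * appS e f (s, n, j) - appS e (absD f) (s, n, j) = appS (dsS e) f (s, n, j).
Proof.
  intros Hi. unfold appS. rewrite Hi. cbn [tgt dsS sc fl sa sb].
  unfold ext. destruct (validb (xorb (fl e) s, (n + sa e)%Z, (j + sb e)%Z)) eqn:E.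
  - unfold absD. rewrite E. ring.
  - ring.
Qed.

Lemma Rep_ds l T : Rep l T -> Rep (map dsS l) (delta T).
Proof.
  intros H f [[s n] j] Hi. unfold delta, comm. unfold absD at 1. rewrite Hi.
  rewrite H by auto. rewrite H by auto.
  clear H. induction l as [|e l IH]; [simpl; ring|].
  cbn [map]. rewrite !sumS_cons, <- IH, <- appS_ds by auto. ring.
Qed.

Definition sumf (g : idx -> R) (L : list idx) : R := fold_right (fun i acc => g i + acc) 0 L.

Lemma sumsq_sumf L f : sumsq L f = sumf (fun i => f i ^ 2) L.
Proof. reflexivity. Qed.

Lemma sumf_app g L1 L2 : sumf g (L1 ++ L2) = sumf g L1 + sumf g L2.
Proof. induction L1; simpl; [ring|]. rewrite IHL1; ring. Qed.

Lemma sumf_nonneg g L : (forall k, 0 <= g k) -> 0 <= sumf g L.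
Proof. intros H; induction L; simpl; [lra|]. specialize (H a); lra. Qed.

Lemma sumf_mono u v L : (forall i, In i L -> u i <= v i) -> sumf u L <= sumf v L.
Proof.
  induction L; simpl; intros H; [lra|].
  assert (u a <= v a) by auto. assert (sumf u L <= sumf v L) by auto. lra.
Qed.

Lemma sumf_ext u v L : (forall i, In i L -> u i = v i) -> sumf u L = sumf v L.
Proof.
  induction L; simpl; intros H; auto. rewrite H, IHL; auto.
Qed.

Lemma sumf_scal r g L : sumf (fun i => r * g i) L = r * sumf g L.
Proof. induction L; simpl; [ring|]. rewrite IHL; ring. Qed.

Lemma sumf_map g h L : sumf g (map h L) = sumf (fun i => g (h i)) L.
Proof. induction L; simpl; auto. rewrite IHL; auto. Qed.

Lemma idx_eq_dec (x y : idx) : {x = y} + {x <> y}.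
Proof. decide equality; [apply Z.eq_dec| decide equality; [apply Z.eq_dec|apply Bool.bool_dec]]. Defined.

Lemma sumf_sub (g : idx -> R) K : forall L, NoDup K -> NoDup L ->
  (forall k, In k K -> ~ In k L -> g k = 0) -> (forall k, 0 <= g k) ->
  sumf g K <= sumf g L.
Proof.
  induction K as [|k K IH]; intros L HK HL Hz Hg; simpl.
  - apply sumf_nonneg; auto.
  - inversion HK; subst.
    destruct (In_dec idx_eq_dec k L) as [Hin|Hin].
    + destruct (in_split _ _ Hin) as [L1 [L2 ->]].
      rewrite sumf_app. simpl.
      assert (HL' : NoDup (L1 ++ L2)) by (eapply NoDup_remove_1; eauto).
      assert (sumf g K <= sumf g (L1 ++ L2)).
      { apply IH; auto. intros k' Hk' Hn. apply Hz; [simpl; auto|].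
        intros Hin'. apply in_app_or in Hin'. destruct Hin' as [H|[H|H]].
        - apply Hn, in_or_app; auto.
        - subst; contradiction.
        - apply Hn, in_or_app; auto. }
      rewrite sumf_app in H. lra.
    + rewrite Hz by (simpl; auto).
      assert (sumf g K <= sumf g L) by (apply IH; auto; intros; apply Hz; simpl; auto). lra.
Qed.

Lemma Bounded_appS e : bnd e -> Bounded (appS e).
Proof.
  intros [M HM]. exists (Rabs M). split; [apply Rabs_pos|].
  intros L f HL HLv Hf L' HL' HL'v.
  rewrite !sumsq_sumf.
  apply Rle_trans with (sumf (fun i => (Rabs M) ^ 2 * (fun k => f k ^ 2) (tgt e i)) L').
  - apply sumf_mono. intros i Hi. rewrite List.Forall_forall in HL'v. specialize (HL'v i Hi).
    unfold valid in HL'v. unfold appS. rewrite HL'v. unfold ext.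
    destruct (validb (tgt e i)) eqn:E.
    + specialize (HM i HL'v E).
      assert (0 <= Rabs (sc e i)) by apply Rabs_pos.
      assert (Rabs (sc e i) <= Rabs M) by (eapply Rle_trans; [apply HM| apply RRle_abs]).
      assert (sc e i ^ 2 <= Rabs M ^ 2) by (rewrite <- (pow2_abs (sc e i)); apply pow_incr; lra).
      replace ((sc e i * f (tgt e i)) ^ 2) with (sc e i ^ 2 * f (tgt e i) ^ 2) by ring.
      apply Rmult_le_compat_r; [apply pow2_ge_0|]. auto.
    + replace ((sc e i * 0) ^ 2) with 0 by ring. apply Rmult_le_pos; apply pow2_ge_0.
  - rewrite sumf_scal. apply Rmult_le_compat_l; [apply pow2_ge_0|].
    rewrite <- (sumf_map (fun k => f k ^ 2) (tgt e)).
    apply sumf_sub; auto.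
    + apply NoDup_map_NoDup_ForallPairs; auto. intros x y _ _. apply tgt_inj.
    + intros k _ Hk. rewrite Hf; auto; ring.
    + intros; apply pow2_ge_0.
Qed.

Lemma sumf_sq_add u v L : sumf (fun i => (u i + v i) ^ 2) L <=
  2 * sumf (fun i => u i ^ 2) L + 2 * sumf (fun i => v i ^ 2) L.
Proof.
  induction L; simpl; [lra|].
  assert (E: 2 * u a ^ 2 + 2 * v a ^ 2 - (u a + v a) ^ 2 = (u a - v a) ^ 2) by ring. pose proof (pow2_ge_0 (u a - v a)). simpl in *. lra.
Qed.

Lemma Bounded_add S T U : Bounded S -> Bounded T -> (forall f i, U f i = S f i + T f i) -> Bounded U.
Proof.
  intros [C1 [HC1 H1]] [C2 [HC2 H2]] HU. exists (2 * (C1 + C2)). split; [lra|].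
  intros L f HL HLv Hf L' HL' HL'v.
  specialize (H1 L f HL HLv Hf L' HL' HL'v). specialize (H2 L f HL HLv Hf L' HL' HL'v).
  assert (X0 : 0 <= sumsq L f) by (rewrite sumsq_sumf; apply sumf_nonneg; intros; apply pow2_ge_0).
  rewrite sumsq_sumf. rewrite (sumf_ext _ (fun i => (S f i + T f i) ^ 2)) by (intros; rewrite HU; auto).
  eapply Rle_trans; [apply sumf_sq_add|]. rewrite !sumsq_sumf in *.
  assert (2 * C1 ^ 2 + 2 * C2 ^ 2 <= (2 * (C1 + C2)) ^ 2) by nra.
  apply Rmult_le_compat_r with (r := sumf (fun i => f i ^ 2) L) in H; [|auto]. lra.
Qed.

Lemma Bounded_sumS l : List.Forall bnd l -> Bounded (sumS l).
Proof.
  induction 1.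
  - exists 0. split; [lra|]. intros. unfold sumS; simpl.
    rewrite sumsq_sumf. rewrite (sumf_ext _ (fun _ => 0)) by (intros; ring).
    assert (Z0 : forall K, sumf (fun _ => 0) K = 0) by (induction K; simpl; auto; rewrite IHK; ring).
    rewrite Z0. assert (0 <= sumsq L f) by (rewrite sumsq_sumf; apply sumf_nonneg; intros; apply pow2_ge_0). nra.
  - eapply Bounded_add; [apply Bounded_appS; eauto | apply IHForall |]. intros; reflexivity.
Qed.

Lemma Bounded_Rep l T : Rep l T -> List.Forall bnd l -> Bounded T.
Proof.
  intros HR Hb. destruct (Bounded_sumS l Hb) as [C [HC H]]. exists C; split; auto.
  intros L f HL HLv Hf L' HL' HL'v. rewrite sumsq_sumf.
  rewrite (sumf_ext _ (fun i => sumS l f i ^ 2)).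
  - apply H; auto.
  - intros i Hi. rewrite List.Forall_forall in HL'v. rewrite HR; auto. apply HL'v; auto.
Qed.

Lemma Rabs_le_abs x M : Rabs x <= M -> Rabs x <= Rabs M.
Proof. intros; eapply Rle_trans; [eauto|apply RRle_abs]. Qed.

Lemma bnd_comp e1 e2 : bnd e1 -> bnd e2 -> bnd (compS e1 e2).
Proof.
  intros [M1 H1] [M2 H2]. exists (Rabs M1 * Rabs M2). intros i Hi Ht.
  rewrite tgt_comp in Ht. cbn [compS sc].
  destruct (validb (tgt e1 i)) eqn:E.
  - rewrite Rabs_mult. apply Rmult_le_compat; try apply Rabs_pos; apply Rabs_le_abs; auto.
  - rewrite Rabs_R0. apply Rmult_le_pos; apply Rabs_pos.
Qed.

Lemma bnd_scal r e : bnd e -> bnd (scS r e).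
Proof.
  intros [M H]. exists (Rabs r * Rabs M). intros i Hi Ht.
  replace (tgt (scS r e) i) with (tgt e i) in Ht by (destruct i as [[? ?] ?]; reflexivity).
  cbn [scS sc]. rewrite Rabs_mult. apply Rmult_le_compat_l; [apply Rabs_pos|]. apply Rabs_le_abs; auto.
Qed.

Lemma bnd_ds e : bnd e -> bnd (dsS e).
Proof.
  intros [M H]. exists (Rabs (IZR (sa e)) * Rabs M). intros [[s n] j] Hi Ht.
  replace (tgt (dsS e) (s, n, j)) with (tgt e (s, n, j)) in Ht by reflexivity.
  cbn [dsS sc]. rewrite Rabs_mult.
  replace (IZR n + 1 - (IZR (n + sa e) + 1)) with (- IZR (sa e)) by (rewrite plus_IZR; ring).
  rewrite Rabs_Ropp. apply Rmult_le_compat_l; [apply Rabs_pos|]. apply Rabs_le_abs; auto.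
Qed.

Lemma validb_tgt_dc e i : validb (tgt (dcS e) i) = validb (tgt e i).
Proof. destruct i as [[s n] j]; reflexivity. Qed.

Lemma bnd_dc e : nice e -> bnd (dcS e).
Proof.
  intros [_ [_ [M H]]]. exists M. intros [[s n] j] Hi Ht. rewrite validb_tgt_dc in Ht.
  cbn [dcS sc sa]. apply H; auto.
Qed.

Lemma nice_id : nice idS.
Proof.
  split; [reflexivity|split].
  - exists 1. intros. simpl. rewrite Rabs_R1; lra.
  - exists 0. intros s n j _ _. simpl. rewrite Z.add_0_r.
    replace ((IZR n + 1) * 1 - (IZR n + 1) * 1) with 0 by ring. rewrite Rabs_R0; lra.
Qed.

Lemma nice_scal r e : nice e -> nice (scS r e).
Proof.
  intros [Hf [Hb [M H]]]. split; [simpl; auto| split; [apply bnd_scal; auto|]].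
  exists (Rabs r * Rabs M). intros s n j Hi Ht.
  replace (tgt (scS r e) (s, n, j)) with (tgt e (s, n, j)) in Ht by reflexivity.
  cbn [scS sc sa].
  replace ((IZR n + 1) * (r * sc e (negb s, n, j)) - (IZR (n + sa e) + 1) * (r * sc e (s, n, j)))
    with (r * ((IZR n + 1) * sc e (negb s, n, j) - (IZR (n + sa e) + 1) * sc e (s, n, j))) by ring.
  rewrite Rabs_mult. apply Rmult_le_compat_l; [apply Rabs_pos|]. apply Rabs_le_abs; auto.
Qed.

Lemma nice_comp e1 e2 : nice e1 -> nice e2 -> nice (compS e1 e2).
Proof.
  intros [F1 [B1 [N1 H1]]] [F2 [B2 [N2 H2]]].
  destruct B1 as [M1 HM1]. destruct B2 as [M2 HM2].
  split; [simpl; rewrite F1, F2; reflexivity|].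
  split; [apply bnd_comp; [exists M1 | exists M2]; auto|].
  exists (Rabs N1 * Rabs M2 + Rabs M1 * Rabs N2). intros s n j Hi Ht.
  rewrite tgt_comp in Ht. cbn [compS sc sa].
  assert (T1 : forall s', tgt e1 (s', n, j) = (s', (n + sa e1)%Z, (j + sb e1)%Z))
    by (intros; simpl; rewrite F1; reflexivity).
  rewrite !T1. rewrite T1 in Ht.
  rewrite (validb_s (negb s) s).
  destruct (validb (s, (n + sa e1)%Z, (j + sb e1)%Z)) eqn:E.
  - set (X := sc e1 (negb s, n, j)). set (Y := sc e1 (s, n, j)).
    set (U := sc e2 (negb s, (n + sa e1)%Z, (j + sb e1)%Z)).
    set (W := sc e2 (s, (n + sa e1)%Z, (j + sb e1)%Z)).
    assert (HP1 : Rabs ((IZR n + 1) * X - (IZR (n + sa e1) + 1) * Y) <= Rabs N1).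
    { apply Rabs_le_abs, H1; auto; try (rewrite T1; auto). }
    assert (HP2 : Rabs ((IZR (n + sa e1) + 1) * U - (IZR (n + sa e1 + sa e2) + 1) * W) <= Rabs N2).
    { apply Rabs_le_abs. unfold U, W. apply H2; auto. }
    assert (HY : Rabs Y <= Rabs M1) by (apply Rabs_le_abs, HM1; auto; rewrite T1; auto).
    assert (HU : Rabs U <= Rabs M2).
    { apply Rabs_le_abs, HM2; [rewrite (validb_s _ s); auto|].
      replace (tgt e2 (negb s, (n + sa e1)%Z, (j + sb e1)%Z)) with
        (xorb (fl e2) (negb s), (n + sa e1 + sa e2)%Z, (j + sb e1 + sb e2)%Z) by reflexivity.
      simpl in Ht. rewrite (validb_s _ (xorb (fl e2) s)). auto. }
    replace ((IZR n + 1) * (X * U) - (IZR (n + (sa e1 + sa e2)) + 1) * (Y * W)) with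
      (((IZR n + 1) * X - (IZR (n + sa e1) + 1) * Y) * U +
       Y * ((IZR (n + sa e1) + 1) * U - (IZR (n + sa e1 + sa e2) + 1) * W))
      by (rewrite Z.add_assoc; ring).
    eapply Rle_trans; [apply Rabs_triang|]. rewrite !Rabs_mult.
    apply Rplus_le_compat; apply Rmult_le_compat; try apply Rabs_pos; auto.
  - replace ((IZR n + 1) * 0 - (IZR (n + (sa e1 + sa e2)) + 1) * 0) with 0 by ring.
    rewrite Rabs_R0. apply Rplus_le_le_0_compat; apply Rmult_le_pos; apply Rabs_pos.
Qed.

Lemma Forall_compL P l1 l2 : (forall e1 e2, P e1 -> P e2 -> P (compS e1 e2)) ->
  List.Forall P l1 -> List.Forall P l2 -> List.Forall P (compL l1 l2).
Proof.
  intros H H1 H2. unfold compL. apply List.Forall_forall. intros x Hx.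
  apply in_flat_map in Hx. destruct Hx as [e1 [He1 Hx]]. apply in_map_iff in Hx.
  destruct Hx as [e2 [<- He2]]. rewrite List.Forall_forall in H1, H2. auto.
Qed.

Lemma Forall_map' (P Q : Sh -> Prop) f l : (forall e, P e -> Q (f e)) -> List.Forall P l -> List.Forall Q (map f l).
Proof. intros H Hl. induction Hl; simpl; constructor; auto. Qed.

Lemma InAlg_rep (G : Op -> Prop) (P : Sh -> Prop) :
  P idS -> (forall r e, P e -> P (scS r e)) -> (forall e1 e2, P e1 -> P e2 -> P (compS e1 e2)) ->
  (forall T, G T -> exists l, Rep l T /\ List.Forall P l) ->
  forall T, InAlg G T -> exists l, Rep l T /\ List.Forall P l.
Proof.
  intros Hid Hsc Hc Hg T HT. induction HT.
  - auto.
  - exists (idS :: nil). split; [apply Rep_id| constructor; auto].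
  - destruct IHHT1 as [l1 [R1 F1]], IHHT2 as [l2 [R2 F2]].
    exists (l1 ++ l2). split; [apply Rep_add; auto| apply Forall_app; auto].
  - destruct IHHT as [l [R1 F1]]. exists (map (scS r) l). split; [apply Rep_scal; auto|].
    apply Forall_map'  with (P := P); auto.
  - destruct IHHT1 as [l1 [R1 F1]], IHHT2 as [l2 [R2 F2]].
    exists (compL l1 l2). split; [apply Rep_comp; auto| apply Forall_compL; auto].
Qed.

Lemma Q_pos q x : 0 < Rpower q x.
Proof. unfold Rpower; apply exp_pos. Qed.

Lemma Q_mul q a b : Rpower q a * Rpower q b = Rpower q (a + b).
Proof. rewrite Rpower_plus; auto. Qed.

Lemma lnq_neg q : 0 < q -> q < 1 -> ln q < 0.
Proof. intros; rewrite <- ln_1; apply ln_increasing; auto. Qed.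

Lemma Q_dec q x y : 0 < q -> q < 1 -> x <= y -> Rpower q y <= Rpower q x.
Proof.
  intros H0 H1 Hxy. unfold Rpower. pose proof (lnq_neg q H0 H1) as Hln.
  destruct (Rle_lt_or_eq_dec _ _ Hxy) as [H|H].
  - left. apply exp_increasing. nra.
  - subst; lra.
Qed.

Lemma Q_le1 q x : 0 < q -> q < 1 -> 0 <= x -> Rpower q x <= 1.
Proof. intros. rewrite <- (Rpower_O q) by auto. apply Q_dec; auto. Qed.

Lemma Q_2 q : 0 < q -> Rpower q 2 = q ^ 2.
Proof. intros. replace 2 with (INR 2) by (simpl; ring). apply Rpower_pow; auto. Qed.

Lemma xQ q x : 0 < q -> q < 1 -> 0 <= x -> x * Rpower q x <= / (- ln q).
Proof.
  intros H0 H1 Hx. pose proof (lnq_neg q H0 H1) as Hl. set (t := - ln q).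
  assert (Ht : 0 < t) by (unfold t; lra).
  unfold Rpower. replace (x * ln q) with (- (x * t)) by (unfold t; ring).
  rewrite exp_Ropp.
  assert (E : x * t <= exp (x * t)).
  { destruct (Req_dec (x * t) 0) as [Z|Z].
    - rewrite Z, exp_0; lra.
    - pose proof (exp_ineq1 (x * t) Z); lra. }
  pose proof (exp_pos (x * t)).
  replace (x * / exp (x * t)) with (((x * t) * / exp (x * t)) * / t) by (field; split; lra).
  assert (A : (x * t) * / exp (x * t) <= 1).
  { apply Rmult_le_reg_r with (exp (x * t)); [lra|]. rewrite Rmult_assoc, Rinv_l by lra. lra. }
  pose proof (Rinv_0_lt_compat t Ht). nra.
Qed.

Definition dq (q : R) := / q - q.

Lemma dq_pos q : 0 < q -> q < 1 -> 0 < dq q.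
Proof.
  intros. unfold dq. assert (1 < / q). { rewrite <- Rinv_1. apply Rinv_lt_contravar; lra. } lra.
Qed.

Lemma qnum_eq q x : 0 < q -> q < 1 -> qnum q x = (Rpower q (- x) - Rpower q x) / dq q.
Proof.
  intros. unfold qnum, dq. pose proof (dq_pos q H H0). unfold dq in H1.
  field. repeat split; nra.
Qed.

Lemma qnum_nn q x : 0 < q -> q < 1 -> 0 <= x -> 0 <= qnum q x.
Proof.
  intros. rewrite qnum_eq by auto. pose proof (dq_pos q H H0).
  assert (Rpower q x <= Rpower q (- x)) by (apply Q_dec; auto; lra).
  apply Rdiv_le_0_compat; lra.
Qed.

Lemma qnum_up q x : 0 < q -> q < 1 -> 0 <= x -> qnum q x <= Rpower q (- x) / dq q.
Proof.
  intros. rewrite qnum_eq by auto. pose proof (dq_pos q H H0). pose proof (Q_pos q x).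
  unfold Rdiv. apply Rmult_le_compat_r; [left; apply Rinv_0_lt_compat; auto| lra].
Qed.

Lemma qnum_low q x : 0 < q -> q < 1 -> 1 <= x -> (1 - q ^ 2) * Rpower q (- x) / dq q <= qnum q x.
Proof.
  intros. rewrite qnum_eq by auto. pose proof (dq_pos q H H0).
  assert (E : Rpower q x = Rpower q (- x) * Rpower q (2 * x)) by (rewrite Q_mul; f_equal; ring).
  assert (Rpower q (2 * x) <= q ^ 2) by (rewrite <- Q_2 by auto; apply Q_dec; auto; lra).
  pose proof (Q_pos q (- x)).
  unfold Rdiv. apply Rmult_le_compat_r; [left; apply Rinv_0_lt_compat; auto|]. rewrite E. nra.
Qed.

Lemma qnum_0 q : qnum q 0 = 0.
Proof. unfold qnum. rewrite Ropp_0. unfold Rdiv. ring. Qed.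

Lemma sqrt_bd q a b x y : 0 < q -> q < 1 ->
  0 <= a <= Rpower q (- x) / dq q -> 0 <= b <= Rpower q (- y) / dq q ->
  sqrt (a * b) <= Rpower q (- ((x + y) / 2)) / dq q.
Proof.
  intros H0 H1 Ha Hb. pose proof (dq_pos q H0 H1). pose proof (Q_pos q (- ((x + y) / 2))).
  rewrite <- (sqrt_pow2 (Rpower q (- ((x + y) / 2)) / dq q)) by (apply Rdiv_le_0_compat; lra).
  apply sqrt_le_1_alt.
  apply Rle_trans with ((Rpower q (- x) / dq q) * (Rpower q (- y) / dq q)).
  - apply Rmult_le_compat; lra.
  - right. unfold Rdiv. replace (Rpower q (- x) * / dq q * (Rpower q (- y) * / dq q)) with
      ((Rpower q (- x) * Rpower q (- y)) * / dq q * / dq q) by ring.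
    assert (E: Rpower q (-x) * Rpower q (-y) = Rpower q (-((x+y)/2)) * Rpower q (-((x+y)/2)))
      by (rewrite !Q_mul; f_equal; field).
    unfold Rdiv in E. rewrite E. ring.
Qed.

Lemma frac_bd X S Sb D Dl K : 0 <= X -> 0 <= S <= Sb -> 0 < Dl <= D -> X * Sb <= K * Dl -> 0 <= K ->
  0 <= X * S / D <= K.
Proof.
  intros. split.
  - apply Rdiv_le_0_compat; nra.
  - apply Rmult_le_reg_r with D; [lra|]. unfold Rdiv. rewrite Rmult_assoc, Rinv_l by lra.
    assert (X * S <= X * Sb) by nra. nra.
Qed.

Definition vp (n j : Z) : Prop := (0 <= n /\ - (n + 1) <= j <= n)%Z.

Lemma vp_real n j : vp n j ->
  1 / 2 <= lval n /\ - lval n <= mval j /\ mval j <= lval n.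
Proof.
  intros [H1 [H2 H3]]. unfold lval, mval.
  apply IZR_le in H1. apply IZR_le in H2. apply IZR_le in H3.
  rewrite opp_IZR, plus_IZR in H2. lra.
Qed.

Lemma XSb_le q a b c : 0 < q -> q < 1 -> c <= a + b ->
  Rpower q a * (Rpower q b / dq q) <= / (1 - q ^ 2) * ((1 - q ^ 2) * Rpower q c / dq q).
Proof.
  intros H0 H1 H. pose proof (dq_pos q H0 H1).
  assert (0 < 1 - q ^ 2) by nra.
  replace (/ (1 - q ^ 2) * ((1 - q ^ 2) * Rpower q c / dq q)) with (Rpower q c / dq q) by (field; lra).
  unfold Rdiv. rewrite <- Rmult_assoc, Q_mul. apply Rmult_le_compat_r.
  - left; apply Rinv_0_lt_compat; auto.
  - apply Q_dec; auto.
Qed.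

Lemma Dl_pos q c : 0 < q -> q < 1 -> 0 < (1 - q ^ 2) * Rpower q c / dq q.
Proof.
  intros. pose proof (dq_pos q H H0). pose proof (Q_pos q c).
  assert (0 < 1 - q ^ 2) by nra. apply Rdiv_lt_0_compat; auto. nra.
Qed.

Lemma frac_bd_abs N Nb D Dl K : Rabs N <= Nb -> 0 < Dl <= D -> Nb <= K * Dl -> 0 <= K ->
  Rabs (N / D) <= K.
Proof.
  intros. unfold Rdiv. rewrite Rabs_mult, Rabs_inv, (Rabs_pos_eq D) by lra.
  apply Rmult_le_reg_r with D; [lra|]. rewrite Rmult_assoc, Rinv_l by lra.
  pose proof (Rabs_pos N). nra.
Qed.

Lemma A1_bd q (n j : Z) : 0 < q -> q < 1 -> vp n j -> 0 <= Defs.A1 q n j <= / (1 - q ^ 2).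
Proof.
  intros H0 H1 Hv. pose proof (vp_real n j Hv) as Hr. unfold Defs.A1; cbv zeta.
  set (l := lval n) in *. set (m := mval j) in *. pose proof (dq_pos q H0 H1).
  assert (0 < 1 - q ^ 2) by nra.
  apply frac_bd with (Sb := Rpower q (- (((l + m + 1) + (l + m + 2)) / 2)) / dq q)
                     (Dl := (1 - q ^ 2) * Rpower q (- (2 * l + 2)) / dq q).
  - left; apply Q_pos.
  - split; [apply sqrt_pos|]. apply sqrt_bd; auto; split;
      (apply qnum_nn || apply qnum_up); auto; lra.
  - split; [apply Dl_pos; auto|]. apply qnum_low; auto; lra.
  - apply XSb_le; auto; lra.
  - left; apply Rinv_0_lt_compat; auto.
Qed.

Lemma A2_bd q (n j : Z) : 0 < q -> q < 1 -> vp n j -> 0 <= Defs.A2 q n j <= / (1 - q ^ 2).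
Proof.
  intros H0 H1 Hv. pose proof (vp_real n j Hv) as Hr. unfold Defs.A2; cbv zeta.
  assert (Hlm : lval n - mval j = 0 \/ 1 <= lval n - mval j).
  { unfold lval, mval. replace (IZR n + / 2 - (IZR j + / 2)) with (IZR (n - j)) by (rewrite minus_IZR; ring).
    destruct Hv as [_ [_ Hj]]. destruct (Z.eq_dec n j) as [E|E].
    - left. rewrite E, Z.sub_diag. reflexivity.
    - right. apply IZR_le. lia. }
  set (l := lval n) in *. set (m := mval j) in *. pose proof (dq_pos q H0 H1).
  assert (0 < 1 - q ^ 2) by nra.
  apply frac_bd with (Sb := Rpower q (- (((l - m - 1) + (l - m)) / 2)) / dq q)
                     (Dl := (1 - q ^ 2) * Rpower q (- (2 * l)) / dq q).
  - left; apply Q_pos.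
  - split; [apply sqrt_pos|]. destruct Hlm as [E|E].
    + replace (l - m) with 0 by lra. rewrite qnum_0, Rmult_0_r, sqrt_0.
      apply Rdiv_le_0_compat; [left; apply Q_pos| auto].
    + apply sqrt_bd; auto; split; (apply qnum_nn || apply qnum_up); auto; lra.
  - split; [apply Dl_pos; auto|]. apply qnum_low; auto; lra.
  - apply XSb_le; auto; lra.
  - left; apply Rinv_0_lt_compat; auto.
Qed.

Lemma B1_bd q (n j : Z) : 0 < q -> q < 1 -> vp n j -> 0 <= Defs.B1 q n j <= / (1 - q ^ 2).
Proof.
  intros H0 H1 Hv. pose proof (vp_real n j Hv) as Hr. unfold Defs.B1; cbv zeta.
  set (l := lval n) in *. set (m := mval j) in *. pose proof (dq_pos q H0 H1).
  assert (0 < 1 - q ^ 2) by nra.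
  apply frac_bd with (Sb := Rpower q (- (((l + m + 1) + (l - m + 1)) / 2)) / dq q)
                     (Dl := (1 - q ^ 2) * Rpower q (- (2 * l + 2)) / dq q).
  - left; apply Q_pos.
  - split; [apply sqrt_pos|]. apply sqrt_bd; auto; split;
      (apply qnum_nn || apply qnum_up); auto; lra.
  - split; [apply Dl_pos; auto|]. apply qnum_low; auto; lra.
  - apply XSb_le; auto; lra.
  - left; apply Rinv_0_lt_compat; auto.
Qed.

Lemma B2_bd q (n j : Z) : 0 < q -> q < 1 -> vp n j -> 0 <= Defs.B2 q n j <= / (1 - q ^ 2).
Proof.
  intros H0 H1 Hv. pose proof (vp_real n j Hv) as Hr. unfold Defs.B2; cbv zeta.
  set (l := lval n) in *. set (m := mval j) in *. pose proof (dq_pos q H0 H1).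
  assert (0 < 1 - q ^ 2) by nra.
  apply frac_bd with (Sb := Rpower q (- (((l + m) + (l - m)) / 2)) / dq q)
                     (Dl := (1 - q ^ 2) * Rpower q (- (2 * l)) / dq q).
  - left; apply Q_pos.
  - split; [apply sqrt_pos|]. apply sqrt_bd; auto; split;
      (apply qnum_nn || apply qnum_up); auto; lra.
  - split; [apply Dl_pos; auto|]. apply qnum_low; auto; lra.
  - apply XSb_le; auto; lra.
  - left; apply Rinv_0_lt_compat; auto.
Qed.

Definition Kc q := (1 + q ^ 2) * dq q / (1 - q ^ 2) ^ 2.
Definition Kb q := (1 + q ^ 2) / (1 - q ^ 2) ^ 2.

Lemma Kc_nn q : 0 < q -> q < 1 -> 0 <= Kc q.
Proof.
  intros. pose proof (dq_pos q H H0). unfold Kc. apply Rdiv_le_0_compat.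
  - assert (0 < 1 + q ^ 2) by nra. nra.
  - assert (0 < 1 - q ^ 2) by nra. nra.
Qed.

Lemma Kb_nn q : 0 < q -> q < 1 -> 0 <= Kb q.
Proof.
  intros. unfold Kb. apply Rdiv_le_0_compat.
  - nra.
  - assert (0 < 1 - q ^ 2) by nra. nra.
Qed.

Lemma A3_bd q (n j : Z) : 0 < q -> q < 1 -> vp n j ->
  0 <= Defs.A3 q n j <= Kc q * Rpower q (2 * lval n + 1).
Proof.
  intros H0 H1 Hv. pose proof (vp_real n j Hv) as Hr. unfold Defs.A3; cbv zeta.
  set (l := lval n) in *. set (m := mval j) in *. pose proof (dq_pos q H0 H1) as Hd.
  assert (Hq2 : 0 < 1 - q ^ 2) by nra.
  assert (HD1 : (1 - q ^ 2) * Rpower q (- (2 * l)) / dq q <= qnum q (2 * l)) by (apply qnum_low; auto; lra).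
  assert (HD2 : (1 - q ^ 2) * Rpower q (- (2 * l + 2)) / dq q <= qnum q (2 * l + 2)) by (apply qnum_low; auto; lra).
  pose proof (Dl_pos q (- (2 * l)) H0 H1). pose proof (Dl_pos q (- (2 * l + 2)) H0 H1).
  replace ((1 + q ^ 2) * Rpower q (m - / 2) / (qnum q (2 * l) * qnum q (2 * l + 2)) *
     sqrt (qnum q (l + m + 1) * qnum q (l - m))) with
    (((1 + q ^ 2) * Rpower q (m - / 2)) * sqrt (qnum q (l + m + 1) * qnum q (l - m)) /
     (qnum q (2 * l) * qnum q (2 * l + 2))) by (field; split; lra).
  apply frac_bd with (Sb := Rpower q (- (((l + m + 1) + (l - m)) / 2)) / dq q)
     (Dl := ((1 - q ^ 2) * Rpower q (- (2 * l)) / dq q) * ((1 - q ^ 2) * Rpower q (- (2 * l + 2)) / dq q)).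
  - pose proof (Q_pos q (m - / 2)). nra.
  - split; [apply sqrt_pos|]. apply sqrt_bd; auto; split;
      (apply qnum_nn || apply qnum_up); auto; lra.
  - split; [apply Rmult_lt_0_compat; auto|]. apply Rmult_le_compat; lra.
  - assert (E1 : (1 + q ^ 2) * Rpower q (m - / 2) * (Rpower q (- ((l + m + 1 + (l - m)) / 2)) / dq q)
        = (1 + q ^ 2) * Rpower q (m - / 2 + - ((l + m + 1 + (l - m)) / 2)) / dq q)
      by (rewrite <- Q_mul; unfold Rdiv; ring).
    assert (E2 : Kc q * Rpower q (2 * l + 1) *
       ((1 - q ^ 2) * Rpower q (- (2 * l)) / dq q * ((1 - q ^ 2) * Rpower q (- (2 * l + 2)) / dq q))
       = (1 + q ^ 2) * Rpower q (2 * l + 1 + - (2 * l) + - (2 * l + 2)) / dq q).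
    { rewrite <- (Q_mul q (2 * l + 1 + - (2 * l))), <- (Q_mul q (2 * l + 1)).
      unfold Kc. field. split; lra. }
    rewrite E1, E2. unfold Rdiv. apply Rmult_le_compat_r; [left; apply Rinv_0_lt_compat; auto|].
    apply Rmult_le_compat_l; [nra|]. apply Q_dec; auto; lra.
  - pose proof (Kc_nn q H0 H1). pose proof (Q_pos q (2 * l + 1)). nra.
Qed.

Lemma A3_fin q : 0 < q -> q < 1 -> exists M, forall n j, vp n j ->
  Rabs (Defs.A3 q n j) <= M /\ Rabs ((IZR n + 1) * Defs.A3 q n j) <= M.
Proof.
  intros H0 H1. pose proof (Kc_nn q H0 H1). pose proof (lnq_neg q H0 H1).
  assert (0 < / - ln q) by (apply Rinv_0_lt_compat; lra).
  exists (Kc q + Kc q * (/ 2 * / - ln q)). intros n j Hv.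
  destruct (A3_bd q n j H0 H1 Hv) as [Ha Hb]. pose proof (vp_real n j Hv) as Hr.
  assert (HQ : Rpower q (2 * lval n + 1) <= 1) by (apply Q_le1; auto; lra).
  assert (HX : (2 * lval n + 1) * Rpower q (2 * lval n + 1) <= / - ln q) by (apply xQ; auto; lra).
  assert (En : IZR n + 1 = / 2 * (2 * lval n + 1)) by (unfold lval; field).
  assert (0 <= IZR n + 1) by (unfold lval in Hr; lra).
  pose proof (Q_pos q (2 * lval n + 1)).
  split.
  - rewrite Rabs_pos_eq by auto. assert (Kc q * Rpower q (2 * lval n + 1) <= Kc q) by nra.
    assert (0 <= Kc q * (/ 2 * / - ln q)) by (apply Rmult_le_pos; lra). lra.
  - rewrite Rabs_pos_eq by nra.
    apply Rle_trans with (Kc q * (/ 2 * ((2 * lval n + 1) * Rpower q (2 * lval n + 1)))).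
    + rewrite En. replace (Kc q * (/ 2 * ((2 * lval n + 1) * Rpower q (2 * lval n + 1)))) with
        (/ 2 * (2 * lval n + 1) * (Kc q * Rpower q (2 * lval n + 1))) by ring.
      apply Rmult_le_compat_l; [rewrite <- En; auto| auto].
    + assert (Kc q * (/ 2 * ((2 * lval n + 1) * Rpower q (2 * lval n + 1))) <= Kc q * (/ 2 * / - ln q))
        by (apply Rmult_le_compat_l; auto; lra). lra.
Qed.

Lemma B3_bd q (n j : Z) : 0 < q -> q < 1 -> vp n j ->
  Rabs (Defs.B3 q n j) <= Kb q * Rpower q (2 * lval n + 1).
Proof.
  intros H0 H1 Hv. pose proof (vp_real n j Hv) as Hr. unfold Defs.B3; cbv zeta.
  set (l := lval n) in *. set (m := mval j) in *. pose proof (dq_pos q H0 H1) as Hd.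
  assert (Hq2 : 0 < 1 - q ^ 2) by nra.
  assert (HD1 : (1 - q ^ 2) * Rpower q (- (2 * l)) / dq q <= qnum q (2 * l)) by (apply qnum_low; auto; lra).
  assert (HD2 : (1 - q ^ 2) * Rpower q (- (2 * l + 2)) / dq q <= qnum q (2 * l + 2)) by (apply qnum_low; auto; lra).
  pose proof (Dl_pos q (- (2 * l)) H0 H1). pose proof (Dl_pos q (- (2 * l + 2)) H0 H1).
  set (P := Rpower q (- (2 * l + 1)) / (dq q * dq q)).
  assert (HP : 0 < P) by (unfold P; apply Rdiv_lt_0_compat; [apply Q_pos| nra]).
  assert (Prod : forall x y, 0 <= x -> 0 <= y -> x + y = 2 * l + 1 -> 0 <= qnum q x * qnum q y <= P).
  { intros x y Hx Hy Hxy. pose proof (qnum_nn q x H0 H1 Hx). pose proof (qnum_nn q y H0 H1 Hy).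
    pose proof (qnum_up q x H0 H1 Hx). pose proof (qnum_up q y H0 H1 Hy).
    split; [nra|]. apply Rle_trans with ((Rpower q (- x) / dq q) * (Rpower q (- y) / dq q)).
    - apply Rmult_le_compat; auto.
    - right. unfold P, Rdiv. replace (- (2 * l + 1)) with (- x + - y) by lra. rewrite <- Q_mul.
      field. lra. }
  apply frac_bd_abs with (Nb := (1 + q ^ 2) * P)
     (Dl := ((1 - q ^ 2) * Rpower q (- (2 * l)) / dq q) * ((1 - q ^ 2) * Rpower q (- (2 * l + 2)) / dq q)).
  - destruct (Prod (l - m + 1) (l + m)) as [Pa Pb]; try lra.
    destruct (Prod (l - m) (l + m + 1)) as [Pc Pd]; try lra.
    apply Rabs_le. rewrite Rmult_assoc. split; nra.
  - split; [apply Rmult_lt_0_compat; auto|]. apply Rmult_le_compat; lra.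
  - right. unfold P, Kb.
    replace (- (2 * l + 1)) with (2 * l + 1 + - (2 * l) + - (2 * l + 2)) by lra.
    rewrite <- (Q_mul q (2 * l + 1 + - (2 * l))), <- (Q_mul q (2 * l + 1)).
    field. split; lra.
  - pose proof (Kb_nn q H0 H1). pose proof (Q_pos q (2 * l + 1)). nra.
Qed.

Lemma B3_fin q : 0 < q -> q < 1 -> exists M, forall n j, vp n j ->
  Rabs (Defs.B3 q n j) <= M /\ Rabs ((IZR n + 1) * Defs.B3 q n j) <= M.
Proof.
  intros H0 H1. pose proof (Kb_nn q H0 H1). pose proof (lnq_neg q H0 H1).
  assert (0 < / - ln q) by (apply Rinv_0_lt_compat; lra).
  exists (Kb q + Kb q * (/ 2 * / - ln q)). intros n j Hv.
  pose proof (B3_bd q n j H0 H1 Hv) as Hb. pose proof (vp_real n j Hv) as Hr.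
  assert (HQ : Rpower q (2 * lval n + 1) <= 1) by (apply Q_le1; auto; lra).
  assert (HX : (2 * lval n + 1) * Rpower q (2 * lval n + 1) <= / - ln q) by (apply xQ; auto; lra).
  assert (En : IZR n + 1 = / 2 * (2 * lval n + 1)) by (unfold lval; field).
  assert (0 <= IZR n + 1) by (unfold lval in Hr; lra).
  pose proof (Q_pos q (2 * lval n + 1)).
  split.
  - assert (Kb q * Rpower q (2 * lval n + 1) <= Kb q) by nra.
    assert (0 <= Kb q * (/ 2 * / - ln q)) by (apply Rmult_le_pos; lra). lra.
  - rewrite Rabs_mult, (Rabs_pos_eq (IZR n + 1)) by auto.
    apply Rle_trans with (Kb q * (/ 2 * ((2 * lval n + 1) * Rpower q (2 * lval n + 1)))).
    + rewrite En. replace (Kb q * (/ 2 * ((2 * lval n + 1) * Rpower q (2 * lval n + 1)))) with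
        (/ 2 * (2 * lval n + 1) * (Kb q * Rpower q (2 * lval n + 1))) by ring.
      apply Rmult_le_compat_l; [rewrite <- En; auto| auto].
    + assert (Kb q * (/ 2 * ((2 * lval n + 1) * Rpower q (2 * lval n + 1))) <= Kb q * (/ 2 * / - ln q))
        by (apply Rmult_le_compat_l; auto; lra). lra.
Qed.

Definition mk1 (a b : Z) (F : Z -> Z -> R) : Sh := mkSh false a b (fun i => let '(s, n, j) := i in F n j).
Definition mk3 (b : Z) (F : Z -> Z -> R) : Sh := mkSh false 0 b (fun i => let '(s, n, j) := i in sgn s * F n j).

Lemma validb_vp s n j : validb (s, n, j) = true -> vp n j.
Proof.
  unfold validb, vp. intros H. apply andb_prop in H. destruct H as [H H3]. apply andb_prop in H.
  destruct H as [H1 H2]. apply Z.leb_le in H1, H2, H3. lia.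
Qed.

Lemma validb_tgt_vp e s n j : validb (tgt e (s, n, j)) = true -> vp (n + sa e) (j + sb e).
Proof. intros H. exact (validb_vp _ _ _ H). Qed.

Lemma nice_mk1 a b F : (exists M, forall n j, vp n j -> vp (n + a) (j + b) -> Rabs (F n j) <= M) ->
  nice (mk1 a b F).
Proof.
  intros [M HM]. split; [reflexivity|split].
  - exists M. intros [[s n] j] Hi Ht. apply HM; [exact (validb_vp _ _ _ Hi)| exact (validb_tgt_vp _ _ _ _ Ht)].
  - exists (Rabs (IZR a) * Rabs M). intros s n j Hi Ht. cbn [mk1 sc sa].
    replace ((IZR n + 1) * F n j - (IZR (n + a) + 1) * F n j) with (- IZR a * F n j) by (rewrite plus_IZR; ring).
    rewrite Rabs_mult, Rabs_Ropp. apply Rmult_le_compat_l; [apply Rabs_pos|].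
    apply Rabs_le_abs, HM; [exact (validb_vp _ _ _ Hi)| exact (validb_tgt_vp _ _ _ _ Ht)].
Qed.

Lemma nice_mk3 b F : (exists M, forall n j, vp n j -> vp n (j + b) ->
    Rabs (F n j) <= M /\ Rabs ((IZR n + 1) * F n j) <= M) -> nice (mk3 b F).
Proof.
  intros [M HM]. split; [reflexivity|split].
  - exists M. intros [[s n] j] Hi Ht. apply validb_tgt_vp in Ht. cbn [mk3 sa sb] in Ht. rewrite Z.add_0_r in Ht.
    apply validb_vp in Hi.
    cbn [mk3 sc]. rewrite Rabs_mult.
    assert (Rabs (sgn s) = 1) by (destruct s; simpl; unfold Rabs; destruct Rcase_abs; lra).
    rewrite H, Rmult_1_l. apply HM; auto.
  - exists (2 * Rabs M). intros s n j Hi Ht. cbn [mk3 sc sa]. rewrite Z.add_0_r.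
    apply validb_tgt_vp in Ht. cbn [mk3 sa sb] in Ht. rewrite Z.add_0_r in Ht. apply validb_vp in Hi.
    replace ((IZR n + 1) * (sgn (negb s) * F n j) - (IZR n + 1) * (sgn s * F n j)) with
      (- 2 * sgn s * ((IZR n + 1) * F n j)) by (destruct s; simpl; ring).
    rewrite !Rabs_mult. assert (Rabs (sgn s) = 1) by (destruct s; simpl; unfold Rabs; destruct Rcase_abs; lra).
    rewrite H. replace (Rabs (-2)) with 2 by (unfold Rabs; destruct Rcase_abs; lra).
    assert (Rabs ((IZR n + 1) * F n j) <= Rabs M).
    { apply Rabs_le_abs. apply HM; auto. }
    rewrite <- Rabs_mult. lra.
Qed.

Lemma Rabs_of_bd x K : 0 <= x <= K -> Rabs x <= K.
Proof. intros. rewrite Rabs_pos_eq; lra. Qed.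

Definition La q := mk1 (-1) (-1) (fun n j => Defs.A1 q (n - 1) (j - 1)) ::
  mk1 1 (-1) (fun n j => - Defs.A2 q (n + 1) (j - 1)) :: mk3 (-1) (fun n j => Defs.A3 q n (j - 1)) :: nil.
Definition Las q := mk1 1 1 (fun n j => Defs.A1 q n j) ::
  mk1 (-1) 1 (fun n j => - Defs.A2 q n j) :: mk3 1 (fun n j => Defs.A3 q n j) :: nil.
Definition Lb q := mk1 (-1) 0 (fun n j => - Defs.B1 q (n - 1) j) ::
  mk1 1 0 (fun n j => - Defs.B2 q (n + 1) j) :: mk3 0 (fun n j => Defs.B3 q n j) :: nil.

Lemma Rep_a q : Rep (La q) (pi_a q).
Proof.
  intros f [[s n] j] Hi. unfold pi_a. rewrite Hi. unfold La. rewrite !sumS_cons.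
  unfold appS. rewrite Hi. cbn [tgt mk1 mk3 sc fl sa sb xorb].
  replace (n + -1)%Z with (n - 1)%Z by ring. replace (j + -1)%Z with (j - 1)%Z by ring.
  rewrite Z.add_0_r. unfold sumS; simpl fold_right. ring.
Qed.

Lemma Rep_as q : Rep (Las q) (pi_astar q).
Proof.
  intros f [[s n] j] Hi. unfold pi_astar. rewrite Hi. unfold Las. rewrite !sumS_cons.
  unfold appS. rewrite Hi. cbn [tgt mk1 mk3 sc fl sa sb xorb].
  replace (n + -1)%Z with (n - 1)%Z by ring.
  rewrite Z.add_0_r. unfold sumS; simpl fold_right. ring.
Qed.

Lemma Rep_b q : Rep (Lb q) (pi_b q).
Proof.
  intros f [[s n] j] Hi. unfold pi_b. rewrite Hi. unfold Lb. rewrite !sumS_cons.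
  unfold appS. rewrite Hi. cbn [tgt mk1 mk3 sc fl sa sb xorb].
  replace (n + -1)%Z with (n - 1)%Z by ring.
  rewrite !Z.add_0_r. unfold sumS; simpl fold_right. ring.
Qed.

Lemma nice_a q : 0 < q -> q < 1 -> List.Forall nice (La q).
Proof.
  intros H0 H1. unfold La. apply Forall_cons; [|apply Forall_cons; [|apply Forall_cons; [|apply Forall_nil]]].
  - apply nice_mk1. exists (/ (1 - q ^ 2)). intros n j _ Hv.
    replace (n + -1)%Z with (n - 1)%Z in Hv by ring. replace (j + -1)%Z with (j - 1)%Z in Hv by ring.
    apply Rabs_of_bd, A1_bd; auto.
  - apply nice_mk1. exists (/ (1 - q ^ 2)). intros n j _ Hv.
    replace (j + -1)%Z with (j - 1)%Z in Hv by ring.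
    cbv beta; rewrite Rabs_Ropp. apply Rabs_of_bd, A2_bd; auto.
  - apply nice_mk3. destruct (A3_fin q H0 H1) as [M HM]. exists M. intros n j _ Hv.
    replace (j + -1)%Z with (j - 1)%Z in Hv by ring. apply HM; auto.
Qed.

Lemma nice_as q : 0 < q -> q < 1 -> List.Forall nice (Las q).
Proof.
  intros H0 H1. unfold Las. apply Forall_cons; [|apply Forall_cons; [|apply Forall_cons; [|apply Forall_nil]]].
  - apply nice_mk1. exists (/ (1 - q ^ 2)). intros n j Hv _. apply Rabs_of_bd, A1_bd; auto.
  - apply nice_mk1. exists (/ (1 - q ^ 2)). intros n j Hv _.
    cbv beta; rewrite Rabs_Ropp. apply Rabs_of_bd, A2_bd; auto.
  - apply nice_mk3. destruct (A3_fin q H0 H1) as [M HM]. exists M. intros n j Hv _. apply HM; auto.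
Qed.

Lemma nice_b q : 0 < q -> q < 1 -> List.Forall nice (Lb q).
Proof.
  intros H0 H1. unfold Lb. apply Forall_cons; [|apply Forall_cons; [|apply Forall_cons; [|apply Forall_nil]]].
  - apply nice_mk1. exists (/ (1 - q ^ 2)). intros n j _ Hv.
    replace (n + -1)%Z with (n - 1)%Z in Hv by ring. rewrite Z.add_0_r in Hv.
    cbv beta; rewrite Rabs_Ropp. apply Rabs_of_bd, B1_bd; auto.
  - apply nice_mk1. exists (/ (1 - q ^ 2)). intros n j _ Hv. rewrite Z.add_0_r in Hv.
    cbv beta; rewrite Rabs_Ropp. apply Rabs_of_bd, B2_bd; auto.
  - apply nice_mk3. destruct (B3_fin q H0 H1) as [M HM]. exists M. intros n j Hv _. apply HM; auto.
Qed.

Lemma piA_rep q : 0 < q -> q < 1 -> forall T, piA q T -> exists l, Rep l T /\ List.Forall nice l.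
Proof.
  intros H0 H1. apply InAlg_rep.
  - apply nice_id.
  - apply nice_scal.
  - apply nice_comp.
  - intros T [E|[E|E]]; subst T.
    + exists (La q). split; [apply Rep_a| apply nice_a; auto].
    + exists (Las q). split; [apply Rep_as| apply nice_as; auto].
    + exists (Lb q). split; [apply Rep_b| apply nice_b; auto].
Qed.

Lemma nice_bnd e : nice e -> bnd e.
Proof. intros [_ [H _]]; auto. Qed.

Lemma Bgen_rep q : 0 < q -> q < 1 -> forall T, Bgen q T -> exists l, Rep l T /\ List.Forall bnd l.
Proof.
  intros H0 H1 T [HT | [T0 [HT ->]]].
  - destruct (piA_rep q H0 H1 T HT) as [l [R F]]. exists l. split; auto.
    eapply Forall_map' with (f := fun e => e) in F; [rewrite map_id in F; exact F| apply nice_bnd].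
  - destruct (piA_rep q H0 H1 T0 HT) as [l [R F]]. exists (map dcS l). split.
    + apply Rep_dc; auto.
    + eapply Forall_map'; [|exact F]. apply bnd_dc.
Qed.

Lemma Balg_rep q : 0 < q -> q < 1 -> forall T, Balg q T -> exists l, Rep l T /\ List.Forall bnd l.
Proof.
  intros H0 H1. apply InAlg_rep.
  - apply nice_bnd, nice_id.
  - apply bnd_scal.
  - apply bnd_comp.
  - apply Bgen_rep; auto.
Qed.

Theorem part_bounded q : 0 < q -> q < 1 -> forall T, Balg q T -> Bounded T.
Proof. intros H0 H1 T HT. destruct (Balg_rep q H0 H1 T HT) as [l [R F]]. eapply Bounded_Rep; eauto. Qed.

Theorem part_regular q : 0 < q -> q < 1 -> Regular q.
Proof.
  intros H0 H1 T HT k. destruct (Bgen_rep q H0 H1 T HT) as [l [R F]].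
  assert (forall k, exists l, Rep l (Nat.iter k delta T) /\ List.Forall bnd l).
  { induction k0 as [|k1 IH]; [exists l; auto|].
    destruct IH as [l' [R' F']]. exists (map dsS l'). simpl. split.
    - apply Rep_ds; auto.
    - eapply Forall_map'; [apply bnd_ds| exact F']. }
  destruct (H k) as [l' [R' F']]. eapply Bounded_Rep; eauto.
Qed.

Theorem part_piA_bounded q : 0 < q -> q < 1 -> forall T, piA q T -> Bounded T.
Proof. intros H0 H1 T HT. apply (part_bounded q); auto. apply InAlg_gen. left; auto. Qed.

Theorem part_comm_bounded q : 0 < q -> q < 1 -> forall T, piA q T -> Bounded (comm Dop T).
Proof. intros H0 H1 T HT. apply (part_bounded q); auto. apply InAlg_gen. right; eauto. Qed.

Lemma Dop_sym i e : valid i -> valid e -> Dop (delta_ e) i = Dop (delta_ i) e.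
Proof.
  destruct i as [[s n] j], e as [[s' n'] j']. unfold valid, Dop. intros Hi He. rewrite Hi, He.
  unfold ext. rewrite (validb_s (negb s) s), Hi, (validb_s (negb s') s'), He.
  unfold delta_. cbn [fst snd].
  destruct (Z.eqb_spec n n'); destruct (Z.eqb_spec n' n); try lia;
  destruct (Z.eqb_spec j j'); destruct (Z.eqb_spec j' j); try lia;
  destruct s, s'; simpl; rewrite ?Bool.andb_false_r; try subst; try ring.
Qed.

Definition box (K : nat) : list idx :=
  list_prod (list_prod (true :: false :: nil) (map Z.of_nat (seq 0 K)))
    (map (fun x => (Z.of_nat x - Z.of_nat K)%Z) (seq 0 (2 * K))).

Lemma box_length K : List.length (box K) = (2 * K * (2 * K))%nat.
Proof. unfold box, idx. rewrite !length_prod, !length_map, !length_seq. simpl. lia. Qed.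

Lemma in_box K s n j : (0 <= n < Z.of_nat K)%Z -> (- Z.of_nat K <= j < Z.of_nat K)%Z -> In (s, n, j) (box K).
Proof.
  intros Hn Hj. unfold box. apply in_prod; [apply in_prod|].
  - destruct s; simpl; auto.
  - apply in_map_iff. exists (Z.to_nat n). split; [lia|]. apply in_seq. lia.
  - apply in_map_iff. exists (Z.to_nat (j + Z.of_nat K)). split; [lia|]. apply in_seq. lia.
Qed.

Lemma valid_in_box K s n j : validb (s, n, j) = true -> (n < Z.of_nat K)%Z -> In (s, n, j) (box K).
Proof. intros H Hn. apply validb_vp in H. destruct H as [H1 [H2 H3]]. apply in_box; lia. Qed.

Lemma compact_res eps : 0 < eps -> exists L : list idx,
  forall i, valid i -> eps <= / absD_eig i -> In i L.
Proof.
  intros He. destruct (archimed (/ eps)) as [Hup _].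
  exists (box (Z.to_nat (up (/ eps)))). intros [[s n] j] Hv Hle. unfold valid in Hv.
  apply valid_in_box; auto. simpl in Hle.
  pose proof (validb_vp _ _ _ Hv) as [Hn _]. pose proof Hn as HnZ. apply IZR_le in Hn. simpl in Hn.
  assert (IZR n + 1 <= / eps).
  { apply Rmult_le_reg_l with eps; auto. rewrite Rinv_r by lra.
    apply Rmult_le_compat_r with (r := IZR n + 1) in Hle; [|lra].
    rewrite Rinv_l in Hle by lra. lra. }
  assert (IZR n < IZR (up (/ eps))) by lra. apply lt_IZR in H0.
  assert (0 <= up (/ eps))%Z by lia. rewrite Z2Nat.id; lia.
Qed.

Definition sq (K : nat) : list idx :=
  map (fun x => (true, Z.of_nat (K + x / K), Z.of_nat (x mod K))) (seq 0 (K * K)).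

Lemma sq_NoDup K : K <> 0%nat -> NoDup (sq K).
Proof.
  intros HK. unfold sq. apply NoDup_map_NoDup_ForallPairs; [|apply seq_NoDup].
  intros x y _ _ E. inversion E.
  rewrite (Nat.div_mod_eq x K), (Nat.div_mod_eq y K). lia.
Qed.

Lemma sq_length K : List.length (sq K) = (K * K)%nat.
Proof. unfold sq. rewrite length_map, length_seq. reflexivity. Qed.

Lemma sq_elem K i : K <> 0%nat -> In i (sq K) ->
  exists n j, i = (true, n, j) /\ validb (true, n, j) = true /\ (n + 1 <= 2 * Z.of_nat K)%Z.
Proof.
  intros HK Hi. unfold sq in Hi. apply in_map_iff in Hi. destruct Hi as [x [<- Hx]].
  apply in_seq in Hx. pose proof (Nat.mod_upper_bound x K HK).
  assert (x / K < K)%nat by (apply Nat.Div0.div_lt_upper_bound; lia).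
  eexists; eexists; split; [reflexivity|split].
  - unfold validb. apply andb_true_intro; split; [apply andb_true_intro; split|]; apply Z.leb_le; lia.
  - lia.
Qed.

Lemma sqrt_INR_ge s k : (s * s <= k)%nat -> INR s <= sqrt (INR k).
Proof.
  intros H. rewrite <- (sqrt_pow2 (INR s)) by apply pos_INR. apply sqrt_le_1_alt.
  replace (INR s ^ 2) with (INR (s * s)) by (rewrite mult_INR; ring). apply le_INR; auto.
Qed.

Lemma sqrt_INR_lt s k : (k < s * s)%nat -> sqrt (INR k) < INR s.
Proof.
  intros H. rewrite <- (sqrt_pow2 (INR s)) by apply pos_INR. apply sqrt_lt_1_alt. split; [apply pos_INR|].
  replace (INR s ^ 2) with (INR (s * s)) by (rewrite mult_INR; ring). apply lt_INR; auto.
Qed.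

Definition Ek (k : nat) := fun t => 0 <= t /\ count_le t k.

Lemma LB k t : (1 <= k)%nat -> Ek k t -> / (4 * sqrt (INR k)) <= t.
Proof.
  intros Hk [Ht [L [HL HLi]]].
  set (s := Nat.sqrt k). pose proof (Nat.sqrt_spec' k) as [Hs1 Hs2]. fold s in Hs1, Hs2.
  set (K := S s).
  assert (Hsk : INR s <= sqrt (INR k)) by (apply sqrt_INR_ge; auto).
  assert (Hk1 : 1 <= sqrt (INR k)).
  { rewrite <- sqrt_1. apply sqrt_le_1_alt. replace 1 with (INR 1) by reflexivity. apply le_INR; auto. }
  destruct (Rle_or_lt (/ (4 * sqrt (INR k))) t) as [H|H]; auto. exfalso.
  assert (Incl : incl (sq K) L).
  { intros i Hi. destruct (sq_elem K i ltac:(unfold K; lia) Hi) as [n [j [-> [Hv Hn]]]].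
    apply HLi; [exact Hv|]. simpl.
    apply Rlt_le_trans with (/ (4 * sqrt (INR k))); auto.
    pose proof (validb_vp _ _ _ Hv) as [Hn0 _]. apply IZR_le in Hn0.
    apply Rinv_le_contravar; [lra|].
    apply IZR_le in Hn. rewrite plus_IZR, mult_IZR in Hn. rewrite <- INR_IZR_INZ in Hn.
    unfold K in Hn. rewrite S_INR in Hn. simpl in Hn. lra. }
  pose proof (NoDup_incl_length (sq_NoDup K ltac:(unfold K; lia)) Incl). rewrite sq_length in H0.
  unfold K in H0. lia.
Qed.

Lemma UB k : (16 <= k)%nat -> exists t0, Ek k t0 /\ t0 <= 4 * / sqrt (INR k).
Proof.
  intros Hk. set (s := Nat.sqrt k). pose proof (Nat.sqrt_spec' k) as [Hs1 Hs2]. fold s in Hs1, Hs2.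
  set (K := (s / 2)%nat).
  pose proof (Nat.div_mod_eq s 2) as Ed. pose proof (Nat.mod_upper_bound s 2 ltac:(lia)).
  fold K in Ed.
  assert (Hs4 : (4 <= s)%nat) by nia.
  assert (HK1 : (2 <= K)%nat) by lia.
  assert (HKk : (2 * K * (2 * K) <= k)%nat) by nia.
  assert (Hsk : sqrt (INR k) < INR (S s)) by (apply sqrt_INR_lt; auto).
  assert (Hk4 : 4 <= sqrt (INR k)).
  { replace 4 with (sqrt (INR 16)) by (replace (INR 16) with (4 ^ 2) by (simpl; ring); apply sqrt_pow2; lra).
    apply sqrt_le_1_alt. apply le_INR; auto. }
  assert (HKr : 2 * INR K + 2 >= INR (S s)).
  { replace (2 * INR K + 2) with (INR (2 * K + 2)) by (rewrite plus_INR, mult_INR; simpl; ring).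
    apply Rle_ge, le_INR. lia. }
  assert (HK0 : 0 < INR K) by (apply lt_0_INR; lia).
  exists (/ INR K). split; [split|].
  - left; apply Rinv_0_lt_compat; auto.
  - exists (box K). split; [rewrite box_length; auto|].
    intros [[s' n] j] Hv Hlt. simpl in Hlt. apply valid_in_box; auto.
    pose proof (validb_vp _ _ _ Hv) as [Hn0 _]. apply IZR_le in Hn0.
    destruct (Z_lt_le_dec n (Z.of_nat K)) as [Hl|Hl]; auto. exfalso.
    apply IZR_le in Hl. rewrite <- INR_IZR_INZ in Hl.
    assert (/ (IZR n + 1) <= / INR K) by (apply Rinv_le_contravar; lra). lra.
  - apply Rmult_le_reg_l with (INR K); auto. rewrite Rinv_r by lra.
    apply Rmult_le_reg_r with (sqrt (INR k)); [lra|].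
    replace (INR K * (4 * / sqrt (INR k)) * sqrt (INR k)) with (4 * INR K) by (field; lra). lra.
Qed.

Lemma Rpower_half k : (1 <= k)%nat -> Rpower (INR k) (- / 2) = / sqrt (INR k).
Proof.
  intros. rewrite Rpower_Ropp, Rpower_sqrt; auto. apply lt_0_INR. lia.
Qed.

Theorem metric_dim : MetricDimension 2.
Proof.
  exists (/ 4), 4, 16%nat. split; [lra|]. split; [lra|]. split; [lia|].
  intros k Hk. rewrite Rpower_half by lia.
  assert (Hk1 : 1 <= sqrt (INR k)).
  { rewrite <- sqrt_1. apply sqrt_le_1_alt. replace 1 with (INR 1) by reflexivity. apply le_INR; lia. }
  destruct (UB k Hk) as [t0 [Ht0 Ht0b]].
  unfold sing_absDinv. fold (Ek k).
  destruct (Glb_Rbar_correct (Ek k)) as [Hlb Hglb].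
  assert (G1 : Rbar_le (Glb_Rbar (Ek k)) t0) by (apply Hlb; auto).
  assert (G2 : Rbar_le (/ (4 * sqrt (INR k))) (Glb_Rbar (Ek k))).
  { apply Hglb. intros x Hx. simpl. apply LB; auto. lia. }
  destruct (Glb_Rbar (Ek k)) as [r| |]; simpl in G1, G2; try contradiction.
  simpl. split.
  - rewrite Rinv_mult in G2. lra.
  - lra.
Qed.

Theorem mainTheorem7 (q : R) (hq0 : 0 < q) (hq1 : q < 1) :
  (forall T, Balg q T -> Bounded T) /\
  SpectralTriple q /\ Regular q /\ MetricDimension 2.
Proof.
  split; [apply part_bounded; auto|].
  split; [|split; [apply part_regular; auto| apply metric_dim]].
  unfold SpectralTriple. split; [apply part_piA_bounded; auto|].
  split; [apply Dop_sym|]. split; [apply compact_res|]. apply part_comm_bounded; auto.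
Qed.
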